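(* For all $x,y\ge 1$ and $n>\max(x,y)$, the minimum possible number of edges in any $(x,y)$ task-dependency graph produced by the $(x,y)$ edge-addition process on $n$ vertices is $n-\min(x,y)$.
   Context: A task-dependency graph is a finite directed acyclic graph (no loops, no multiple edges). A vertex is initial if it has in-degree $0$ and terminal if it has out-degree $0$ (an isolated vertex is both). An $(x,y)$ task-dependency graph has exactly $x$ initial and exactly $y$ terminal vertices. The $(x,y)$ edge-addition process on $n$ vertices: start with the empty graph on $\{1,\dots,n\}$ and repeatedly add, uniformly at random, an edge $(a,b)$ with $a<b$ not yet present; if an addition would cause fewer than $x$ initial vertices or fewer than $y$ terminal vertices, it is cancelled. The process halts if the graph after some edge addition is an $(x,y)$ task-dependency graph, or if no more edges can be added; the produced graph is the final graph (over all possible runs). *)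

(* Defs.v *)
From mathcomp Require Import all_boot.
Set Implicit Arguments. Unset Strict Implicit. Unset Printing Implicit Defensive.

(* A directed graph on vertex set {0,...,n-1} ('I_n) is given by its edge set:
   a set of ordered pairs (a,b) meaning an edge a -> b. *)
Definition graph (n : nat) := {set 'I_n * 'I_n}.

Definition edge_rel n (G : graph n) : rel 'I_n := fun u v => (u, v) \in G.

(* acyclic: no edge (a,b) with a directed path from b back to a (this also
   excludes loops). *)
Definition acyclic n (G : graph n) : bool :=
  [forall a, forall b, ((a, b) \in G) ==> ~~ connect (edge_rel G) b a].

Definition initial_vertices n (G : graph n) : {set 'I_n} :=
  [set v | [forall u, (u, v) \notin G]].
Definition terminal_vertices n (G : graph n) : {set 'I_n} :=
  [set v | [forall w, (v, w) \notin G]].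

Definition is_TDG (x y n : nat) (G : graph n) : bool :=
  [&& acyclic G, #|initial_vertices G| == x & #|terminal_vertices G| == y].

(* A non-cancelled edge addition from G to G' in the (x,y) process. *)
Definition add_step (x y n : nat) (G G' : graph n) : Prop :=
  exists a b : 'I_n, [/\ a < b, (a, b) \notin G, G' = (a, b) |: G,
    x <= #|initial_vertices G'| & y <= #|terminal_vertices G'|].

(* Graphs reachable by a run that has not yet halted before reaching it.
   The process halts only after an edge addition produces an (x,y) TDG, so
   the process continues from G if G is the start graph or G is not an
   (x,y) TDG.  Cancelled additions leave the graph unchanged. *)
Inductive reachable (x y n : nat) : graph n -> Prop :=
| reach_start : reachable x y set0
| reach_step G G' : reachable x y G -> (G = set0 \/ ~~ is_TDG x y G) ->
    add_step x y G G' -> reachable x y G'.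

Definition final_graph (x y n : nat) (G : graph n) : Prop :=
  reachable x y G /\
  ((G <> set0 /\ is_TDG x y G) \/ (forall G', ~ add_step x y G G')).

(* Main.v *)
Require Import Defs.
From mathcomp Require Import all_boot.
From mathcomp Require Import zify.

Set Implicit Arguments. Unset Strict Implicit. Unset Printing Implicit Defensive.

Section Build.
Variables (n : nat) (f : nat -> 'I_n * 'I_n).

Fixpoint Gk (k : nat) : graph n :=
  match k with 0 => set0 | k'.+1 => f k' |: Gk k' end.

Lemma memGk k e : e \in Gk k <-> exists i, i < k /\ e = f i.
Proof.
elim: k e => [|k IH] e /=; first by rewrite inE; split => // [[i []]].
rewrite in_setU1; split.
  case/orP => [/eqP -> | ]; first by exists k.
  move=> h; have [i [hi ->]] := proj1 (IH e) h.
  by exists i; split => //; apply: ltnW.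
move=> [i [hi ->]]; move: hi; rewrite ltnS leq_eqVlt => /orP [/eqP -> | hi].
  by rewrite eqxx.
by apply/orP; right; apply/IH; exists i.
Qed.

Lemma Gk_sub k l : k <= l -> Gk k \subset Gk l.
Proof.
move=> hkl; apply/subsetP => e /memGk [i [hi ->]]; apply/memGk; exists i.
by split => //; apply: leq_trans hkl.
Qed.
End Build.

Lemma init_sub n (G G' : graph n) : G \subset G' ->
  initial_vertices G' \subset initial_vertices G.
Proof.
move/subsetP => h; apply/subsetP => v; rewrite !inE => /forallP H.
apply/forallP => u; apply/negP => /h; by rewrite (negbTE (H u)).
Qed.

Lemma term_sub n (G G' : graph n) : G \subset G' ->
  terminal_vertices G' \subset terminal_vertices G.
Proof.
move/subsetP => h; apply/subsetP => v; rewrite !inE => /forallP H.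
apply/forallP => u; apply/negP => /h; by rewrite (negbTE (H u)).
Qed.

Lemma path_le n (G : graph n) (hG : forall a b, (a, b) \in G -> a < b) :
  forall p (b : 'I_n), path (edge_rel G) b p -> b <= last b p.
Proof.
elim => [|c p IH] b //= /andP [hbc hp].
have h1 := hG _ _ hbc; have h2 := IH _ hp.
exact: leq_trans (ltnW h1) h2.
Qed.

Lemma acyclic_lt n (G : graph n) (hG : forall a b, (a, b) \in G -> a < b) :
  acyclic G.
Proof.
apply/forallP => a; apply/forallP => b; apply/implyP => hab.
apply/negP => /connectP [p hp hlast].
have := path_le hG hp; rewrite -hlast => hba.
have := hG _ _ hab; rewrite ltnNge hba //.
Qed.

Lemma build (x y n m : nat) (f : nat -> 'I_n * 'I_n) :
  0 < m ->
  (forall i, i < m -> (f i).1 < (f i).2) ->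
  (forall i j, i < j -> j < m -> f i != f j) ->
  #|initial_vertices (Gk f m)| = x ->
  #|terminal_vertices (Gk f m)| = y ->
  (forall k, 0 < k < m ->
     (#|initial_vertices (Gk f k)| != x) || (#|terminal_vertices (Gk f k)| != y)) ->
  final_graph x y (Gk f m) /\ is_TDG x y (Gk f m) /\ #|Gk f m| = m.
Proof.
move=> hm hlt hinj hi ht hmid.
have hcard : forall k, k <= m -> #|Gk f k| = k.
  elim => [|k IH] hk /=; first by rewrite cards0.
  rewrite cardsU1 IH ?(ltnW hk) //.
  have -> : f k \notin Gk f k; last by rewrite add1n.
  apply/negP => /memGk [i [hi' he]].
  by move: (hinj _ _ hi' hk); rewrite he eqxx.
have hreach : forall k, k <= m -> reachable x y (Gk f k).
  elim => [|k IH] hk; first exact: reach_start.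
  apply: (reach_step (IH (ltnW hk))).
    case: k {IH} hk => [|k] hk; first by left.
    right; rewrite /is_TDG negb_and; apply/orP; right.
    rewrite negb_and; exact: hmid.
  exists (f k).1, (f k).2; split.
  - exact: hlt.
  - have -> : ((f k).1, (f k).2) = f k by case: (f k).
    apply/negP => /memGk [i [hi' he]].
    by move: (hinj _ _ hi' hk); rewrite he eqxx.
  - by have -> : ((f k).1, (f k).2) = f k by case: (f k).
  - rewrite -hi; apply: subset_leq_card; apply: init_sub; exact: Gk_sub.
  - rewrite -ht; apply: subset_leq_card; apply: term_sub; exact: Gk_sub.
have hT : is_TDG x y (Gk f m).
  rewrite /is_TDG hi ht !eqxx !andbT.
  apply: acyclic_lt => a b /memGk [i [him he]].
  by have := hlt i him; rewrite -he.
split; last (split; [exact: hT | exact: hcard]).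
split; first exact: hreach.
left; split => //.
move=> h0; have := hcard m (leqnn m); rewrite h0 cards0 => hm0.
by rewrite -hm0 in hm.
Qed.

Lemma card_lt n k : k <= n -> #|[set v : 'I_n | v < k]| = k.
Proof.
elim: k => [|k IH] hk.
  have -> : [set v : 'I_n | v < 0] = set0 by apply/setP => v; rewrite !inE.
  by rewrite cards0.
have -> : [set v : 'I_n | v < k.+1] = Ordinal hk |: [set v : 'I_n | v < k].
  apply/setP => v; rewrite !inE ltnS leq_eqVlt -val_eqE //.
rewrite cardsU1 IH ?(ltnW hk) // inE ltnn //.
Qed.

Lemma card_ge n k : k <= n -> #|[set v : 'I_n | k <= v]| = n - k.
Proof.
move=> hk.
have -> : [set v : 'I_n | k <= v] = ~: [set v : 'I_n | v < k].
  by apply/setP => v; rewrite !inE -leqNgt.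
have := cardsC [set v : 'I_n | v < k]; rewrite card_ord card_lt //; lia.
Qed.

Theorem mainTheorem11 (x y n : nat) :
  1 <= x -> 1 <= y -> maxn x y < n ->
  (exists G : graph n, [/\ final_graph x y G, is_TDG x y G & #|G| = n - minn x y])
  /\ (forall G : graph n, final_graph x y G -> is_TDG x y G -> n - minn x y <= #|G|).
Proof.
move=> hx hy hn; split; last first.
  move=> G _ /and3P [_ /eqP hI /eqP hT].
  have h1 : n - x <= #|G|.
    have -> : n - x = #|~: initial_vertices G|.
      have := cardsC (initial_vertices G); rewrite card_ord hI; lia.
    apply: leq_trans (leq_imset_card (fun e : 'I_n * 'I_n => e.2) G).
    apply: subset_leq_card; apply/subsetP => v; rewrite !inE.
    move/forallPn => [u]; rewrite negbK => h.
    by apply/imsetP; exists (u, v).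
  have h2 : n - y <= #|G|.
    have -> : n - y = #|~: terminal_vertices G|.
      have := cardsC (terminal_vertices G); rewrite card_ord hT; lia.
    apply: leq_trans (leq_imset_card (fun e : 'I_n * 'I_n => e.1) G).
    apply: subset_leq_card; apply/subsetP => v; rewrite !inE.
    move/forallPn => [u]; rewrite negbK => h.
    by apply/imsetP; exists (v, u).
  lia.
case: n hn => [|n'] hn; first lia.
have [hxy | hyx] := leqP x y.
-
  pose f := fun i : nat => (@inord n' (minn i (n'.+1 - y - 1)), @inord n' (x + i)).
  pose m := n'.+1 - x.
  have hinit : forall k, k <= m ->
      [set v : 'I_n'.+1 | v < x] \subset initial_vertices (Gk f k).
    move=> k hk; apply/subsetP => v; rewrite !inE => hv.
    apply/forallP => u; apply/negP => /memGk [i [hi he]].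
    case: he => _ hv'.
    have : nat_of_ord v = x + i by rewrite hv' inordK; lia.
    lia.
  have [] := @build x y n'.+1 m f.
  + rewrite /m; lia.
  + move=> i hi; rewrite /f /= !inordK; lia.
  + move=> i j hij hj; apply/negP => /eqP [] _ h.
    have := congr1 (@nat_of_ord _) h; rewrite !inordK; lia.
  + rewrite -(@card_lt n'.+1 x); last lia.
    congr (#|pred_of_set _|); apply/esym/eqP; rewrite eqEsubset hinit //=.
    apply/subsetP => v; rewrite !inE => /forallP H.
    rewrite ltnNge; apply/negP => hv.
    have := H (inord (minn (v - x) (n'.+1 - y - 1))); move/negP; apply.
    apply/memGk; exists (v - x); split; first (have := ltn_ord v; rewrite /m; lia).
    rewrite /f /=; congr (_, _); apply: val_inj; rewrite /= inordK; have := ltn_ord v; lia.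
  + have -> : terminal_vertices (Gk f m) = [set v : 'I_n'.+1 | n'.+1 - y <= v].
      apply/setP => v; have hvN := ltn_ord v; rewrite !inE; apply/idP/idP.
      * move/forallP => H; rewrite leqNgt; apply/negP => hv.
        have := H (inord (x + v)); move/negP; apply.
        apply/memGk; exists (nat_of_ord v); split; first (rewrite /m; lia).
        rewrite /f /=; congr (_, _); apply: val_inj; rewrite /= inordK; lia.
      * move=> hv; apply/forallP => w; apply/negP => /memGk [i [hi he]].
        case: he => hv' _.
        have : nat_of_ord v = minn i (n'.+1 - y - 1) by rewrite hv' inordK; lia.
        lia.
    rewrite card_ge; lia.
  + move=> k /andP [hk0 hk]; apply/orP; left.
    rewrite neq_ltn; apply/orP; right.
    have hmax : (@ord_max n') \in initial_vertices (Gk f k).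
      rewrite inE; apply/forallP => u; apply/negP => /memGk [i [hi he]].
      case: he => _ /(congr1 val); rewrite /= inordK; rewrite /m in hk; lia.
    have : #|ord_max |: [set v : 'I_n'.+1 | v < x]| <= #|initial_vertices (Gk f k)|.
      apply: subset_leq_card; rewrite subUset sub1set hmax hinit //; lia.
    rewrite cardsU1 card_lt; last lia.
    rewrite inE /= ltnNge (_ : x <= n') //; lia.
  + move=> hfin [hT hc]; exists (Gk f m); split => //.
-
  pose f := fun i : nat => (@inord n' i, @inord n' (maxn (i + y) x)).
  pose m := n'.+1 - y.
  have hterm : forall k, k <= m ->
      terminal_vertices (Gk f k) = [set v : 'I_n'.+1 | k <= v].
    move=> k hk; apply/setP => v; have hvN := ltn_ord v; rewrite !inE.
    apply/idP/idP.
    * move/forallP => H; rewrite leqNgt; apply/negP => hv.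
      have := H (inord (maxn (v + y) x)); move/negP; apply.
      apply/memGk; exists (nat_of_ord v); split => //.
      rewrite /f /=; congr (_, _); apply: val_inj; rewrite /= inordK; lia.
    * move=> hv; apply/forallP => w; apply/negP => /memGk [i [hi he]].
      case: he => hv' _.
      have : nat_of_ord v = i by rewrite hv' inordK; rewrite /m in hk; lia.
      lia.
  have [] := @build x y n'.+1 m f.
  + rewrite /m; lia.
  + move=> i hi; rewrite /f /= !inordK; rewrite /m in hi; lia.
  + move=> i j hij hj; apply/negP => /eqP [] h _.
    have := congr1 (@nat_of_ord _) h; rewrite !inordK; rewrite /m in hj; lia.
  + rewrite -(@card_lt n'.+1 x); last lia.
    congr (#|pred_of_set _|); apply/setP => v; have hvN := ltn_ord v.
    rewrite !inE; apply/idP/idP.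
    * move/forallP => H; rewrite ltnNge; apply/negP => hv.
      have := H (inord (v - y)); move/negP; apply.
      apply/memGk; exists (v - y); split; first (rewrite /m; lia).
      rewrite /f /=; congr (_, _); apply: val_inj; rewrite /= inordK; lia.
    * move=> hv; apply/forallP => u; apply/negP => /memGk [i [hi he]].
      case: he => _ hv'.
      have : nat_of_ord v = maxn (i + y) x by rewrite hv' inordK; rewrite /m in hi; lia.
      lia.
  + rewrite hterm // card_ge /m; lia.
  + move=> k /andP [hk0 hk]; apply/orP; right.
    rewrite hterm ?card_ge /m; rewrite /m in hk; lia.
  + move=> hfin [hT hc]; exists (Gk f m); split => //.
Qed.
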